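(* For every integer $n\ge 3$ there exists a simple hamiltonian graph on $n$ vertices with maximum degree at most $3$, diameter at most $2\lfloor\log_2 n\rfloor$, and at most $\bigl\lfloor \tfrac{11n}{8}+\tfrac{3}{4}\bigr\rfloor$ edges.
   Context: A graph is hamiltonian if it contains a cycle passing through every vertex exactly once. The diameter of a graph is the maximum over pairs of vertices of their graph distance. *)

(* Defs.v *)
From mathcomp Require Import all_boot.
Set Implicit Arguments. Unset Strict Implicit. Unset Printing Implicit Defensive.

Definition simple_graph (T : finType) (e : rel T) : Prop :=
  symmetric e /\ irreflexive e.

Definition degree (T : finType) (e : rel T) (x : T) : nat := #|[set y | e x y]|.

(* number of edges: unordered pairs {x,y} with e x y, counted via an
   enumeration rank order to pick each pair once *)
Definition num_edges (T : finType) (e : rel T) : nat :=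
  #|[set p : T * T | (enum_rank p.1 < enum_rank p.2)%N && e p.1 p.2]|.

Definition hamiltonian (T : finType) (e : rel T) : Prop :=
  exists s : seq T, [/\ uniq s, size s = #|T| & cycle e s].

(* x and y are at graph distance at most d: there is a walk of length
   (number of edges) at most d from x to y *)
Definition dist_le (T : finType) (e : rel T) (d : nat) (x y : T) : Prop :=
  exists p : seq T, [/\ path e x p, last x p = y & (size p <= d)%N].

Definition diameter_le (T : finType) (e : rel T) (d : nat) : Prop :=
  forall x y : T, dist_le e d x y.

(* Main.v *)
Require Import Defs.
From mathcomp Require Import all_boot.
From Stdlib Require Import Lia.
Set Implicit Arguments. Unset Strict Implicit. Unset Printing Implicit Defensive.

Ltac mlia :=
  intros;
  repeat match goal with
  | H : is_true (~~ (_ <= _)) |- _ => rewrite -ltnNge in H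
  | H : is_true (_ <= _) |- _ => move/leP: H => H
  | H : is_true (_ == _) |- _ => move/eqP: H => H
  end;
  repeat match goal with H : ?P |- _ => lazymatch type of P with Prop => revert H end end;
  rewrite -?muln2 -?plusE -?multE -?minusE; intros;
  try (apply/leP); lia.

Definition par (x : nat) := (x.-1)./2.

Fixpoint isDf (f x : nat) : bool :=
  if f is f'.+1 then [&& 0 < x, ~~ odd x, 0 < par x & ~~ isDf f' (par x)]
  else false.
Definition isD x := isDf x x.

Lemma par_lt x : 0 < x -> par x < x.
Proof.
case: x => // x _; rewrite /par /=.
by rewrite ltnS -divn2 leq_div.
Qed.

Lemma isDf_fuel f g x : x <= f -> x <= g -> isDf f x = isDf g x.
Proof.
elim: f g x => [|f IH] [|g] x //=.
- by rewrite leqn0 => /eqP -> .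
- by rewrite leqn0 => _ /eqP -> .
- move=> hf hg; case: (posnP x) => [->//|xp].
  have hp := par_lt xp.
  by rewrite (IH g) // -ltnS (leq_trans hp).
Qed.

Lemma isDE x : isD x = [&& 0 < x, ~~ odd x, 0 < par x & ~~ isD (par x)].
Proof.
rewrite /isD; case: x => //= x.
have hp : par x.+1 <= x by rewrite -ltnS par_lt.
by rewrite (isDf_fuel hp (leqnn _)).
Qed.

Lemma par_l i : par i.*2.+1 = i.
Proof. by rewrite /par /= doubleK. Qed.
Lemma par_r i : par i.*2.+2 = i.
Proof. by rewrite /par /= uphalf_double. Qed.

Lemma isD_l i : isD i.*2.+1 = false.
Proof. by rewrite isDE /= odd_double. Qed.
Lemma isD_r i : isD i.*2.+2 = (0 < i) && ~~ isD i.
Proof. rewrite isDE par_r /= odd_double; by case: i. Qed.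

Fixpoint Sl (n f i : nat) : seq nat :=
  match f with
  | f'.+1 => if i < n then i :: Sl n f' i.*2.+1 ++ Dl n f' i.*2.+2 else [::]
  | 0 => [::]
  end
with Dl (n f i : nat) : seq nat :=
  match f with
  | f'.+1 => if i < n then rev (Sl n f' i.*2.+1) ++ i :: Sl n f' i.*2.+2 else [::]
  | 0 => [::]
  end.

Fixpoint T (n f i : nat) : seq nat :=
  match f with
  | f'.+1 => if i < n then i :: T n f' i.*2.+1 ++ T n f' i.*2.+2 else [::]
  | 0 => [::]
  end.

Lemma perm_SD n f i : perm_eq (Sl n f i) (T n f i) /\ perm_eq (Dl n f i) (T n f i).
Proof.
elim: f i => [|f IH] i //=; case: ifP => // _.
have [h1 _] := IH i.*2.+1; have [h2 h3] := IH i.*2.+2.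
split.
  by rewrite perm_cons perm_cat.
by rewrite -cat1s perm_catCA /= perm_cons; apply: perm_cat => //; rewrite perm_rev.
Qed.

Definition adjb (L : seq nat) a b := infix [:: a; b] L || infix [:: b; a] L.
Definition AdjP (L : seq nat) i :=
  forall x, x \in L -> x != i -> ~~ isD x -> adjb L x (par x).

Lemma infix_mid (a b : nat) l1 l2 : infix [:: a; b] (l1 ++ a :: b :: l2).
Proof. exact: (infix_infix l1 [:: a; b] l2). Qed.

Lemma adjb_catl L M a b : adjb L a b -> adjb (M ++ L) a b.
Proof. by case/orP => h; apply/orP; [left|right]; apply: infix_catl. Qed.
Lemma adjb_catr L M a b : adjb L a b -> adjb (L ++ M) a b.
Proof. by case/orP => h; apply/orP; [left|right]; apply: infix_catr. Qed.
Lemma adjb_rev L a b : adjb L a b -> adjb (rev L) a b.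
Proof.
rewrite /adjb -(infix_revLR [:: b; a]) -(infix_revLR [:: a; b]).
by rewrite /rev /= orbC.
Qed.

Lemma Sl_head n f j x : x \in Sl n f j -> exists r, Sl n f j = j :: r.
Proof. by case: f => [|f] //=; case: ifP => // _ _; eexists. Qed.

Lemma adj_SD n f :
  (forall i, 0 < i -> ~~ isD i -> AdjP (Sl n f i) i) /\
  (forall i, isD i -> AdjP (Dl n f i) i).
Proof.
elim: f => [|f [IHS IHD]]; first by split => i _ ? x.
split => i.
- move=> ip iD x /=; case: ifP => // _.
  rewrite inE => /orP [/eqP->|]; first by rewrite eqxx.
  rewrite mem_cat => /orP [] xA xi xD.
  + have [r hr] := Sl_head xA.
    case: (eqVneq x i.*2.+1) => [ex|nx].
      rewrite ex par_l hr; apply/orP; right.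
      exact: (infix_mid i i.*2.+1 [::]).
    rewrite -cat_cons; apply: adjb_catr; rewrite -cat1s; apply: adjb_catl.
    by apply: IHS => //; rewrite isD_l.
  + case: (eqVneq x i.*2.+2) => [ex|nx].
      by rewrite ex isD_r ip iD in xD.
    rewrite -cat_cons; apply: adjb_catl; apply: IHD => //.
    by rewrite isD_r ip.
- move=> iD x /=; case: ifP => // _.
  rewrite mem_cat inE mem_rev => /orP [xA|/orP [/eqP->|xB]]; last 2 first.
  + by rewrite eqxx.
  + move=> xi xD; have [r hr] := Sl_head xB.
    case: (eqVneq x i.*2.+2) => [ex|nx].
      rewrite ex par_r hr; apply/orP; right; exact: infix_mid.
    rewrite -cat1s; apply: adjb_catl; apply: adjb_catl; apply: IHS => //.
    by rewrite isD_r iD andbF.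
  + move=> xi xD; have [r hr] := Sl_head xA.
    case: (eqVneq x i.*2.+1) => [ex|nx].
      rewrite ex par_l hr rev_cons -cats1 -catA; apply/orP; left.
      exact: infix_mid.
    apply: adjb_catr; apply: adjb_rev; apply: IHS => //.
    by rewrite isD_l.
Qed.

Lemma T_lt n f i x : x \in T n f i -> x < n.
Proof.
elim: f i => [|f IH] i //=; case: ifP => // lt.
by rewrite inE mem_cat => /orP [/eqP->|/orP [] /IH].
Qed.

Lemma half2 i : (i.*2.+2)./2 = i.+1 /\ (i.*2.+3)./2 = i.+1.
Proof. by split; rewrite /= ?doubleK ?uphalf_double. Qed.

Lemma T_sub n f i x : x \in T n f i -> exists m, x.+1 %/ 2 ^ m = i.+1.
Proof.
elim: f i => [|f IH] i //=; case: ifP => // lt.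
rewrite inE mem_cat => /orP [/eqP->|/orP [] /IH [m hm]].
- by exists 0; rewrite expn0 divn1.
- exists m.+1; rewrite expnSr divnMA hm divn2; exact: (half2 i).1.
- exists m.+1; rewrite expnSr divnMA hm divn2; exact: (half2 i).2.
Qed.

Lemma half_lt b k : b./2 = k.+1 -> k.+1 < b.
Proof.
move=> h; have := odd_double_half b; rewrite h -muln2.
case: (odd b) => /=; mlia.
Qed.

Lemma sub_excl x m m' a b k :
  x %/ 2 ^ m = a -> x %/ 2 ^ m' = b -> a != b -> a./2 = k.+1 -> b./2 = k.+1 -> False.
Proof.
wlog le : m m' a b / m <= m'.
  move=> W ha hb ab hak hbk; case: (leqP m m') => [le|lt].
    exact: (W m m' a b).
  by apply: (W m' m b a) => //; [exact: ltnW|rewrite eq_sym].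
move=> ha hb ab hak hbk.
move: hb; rewrite -(subnKC le) expnD divnMA ha.
case: (posnP (m' - m)) => [->|dp]; first by rewrite expn0 divn1 => hb; rewrite hb eqxx in ab.
move=> hb.
have: b <= a./2.
  rewrite -hb -divn2; apply: leq_div2l => //.
  by rewrite -{1}(expn1 2) leq_exp2l.
rewrite hak; move: (half_lt hbk); mlia.
Qed.

Lemma T_notin n f i : i \notin T n f i.*2.+1 ++ T n f i.*2.+2.
Proof.
apply/negP; rewrite mem_cat => /orP [] /T_sub [m hm];
  have := leq_div i.+1 (2 ^ m); rewrite hm; mlia.
Qed.

Lemma T_uniq n f i : uniq (T n f i).
Proof.
elim: f i => [|f IH] i //.
have -> : T n f.+1 i = if i < n then i :: T n f i.*2.+1 ++ T n f i.*2.+2 else [::] by [].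
case: ifP => // _.
rewrite cons_uniq; apply/andP; split; first exact: T_notin.
rewrite cat_uniq !IH /= andbT.
apply/hasPn => x /T_sub [m2 h2]; apply/negP => /T_sub [m1 h1].
apply: (sub_excl h1 h2 _ (half2 i).1 (half2 i).2).
apply/eqP; mlia.
Qed.

Lemma T_head n f j : j < n -> exists r, T n f.+1 j = j :: r.
Proof. by move=> /= ->; eexists. Qed.

Lemma T_child n f i p c : n - i <= f -> p \in T n f i -> c < n ->
  (c = p.*2.+1 \/ c = p.*2.+2) -> c \in T n f i.
Proof.
elim: f i => [|f IH] i //=; case: ifP => // lt hf.
rewrite inE mem_cat => /orP [/eqP ->|/orP [] hp] cn hc.
- case: f {IH} hf => [|f] hf.
    move: hf cn; case: hc => ->; mlia.
  rewrite inE mem_cat; apply/orP; right; case: hc cn => -> cn; apply/orP;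
    [left|right]; have [r ->] := T_head f cn; by rewrite inE eqxx.
- rewrite inE mem_cat (IH i.*2.+1) //; first by rewrite orbT.
  move: hf; mlia.
- rewrite inE mem_cat (IH i.*2.+2) //; first by rewrite !orbT.
  move: hf; mlia.
Qed.

Lemma T_cover n j : j < n -> j \in T n n.+1 0.
Proof.
elim/ltn_ind: j => j IH jn.
case: j IH jn => [|y] IH jn.
  by have [r ->] := @T_head n n 0 jn; rewrite inE eqxx.
have pl : par y.+1 < y.+1 by apply: par_lt.
apply: (@T_child n n.+1 0 (par y.+1)) => //.
- by rewrite subn0.
- by apply: IH => //; apply: ltn_trans jn.
- rewrite /par /=; have := odd_double_half y; case: (odd y) => /= h.
    right; mlia.
  left; mlia.
Qed.

Definition sl n := rev (Sl n n 2) ++ 0 :: Sl n n 1.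

Lemma sl_perm n : 0 < n -> perm_eq (sl n) (T n n.+1 0).
Proof.
move=> np; rewrite /sl /= np.
have [h1 _] := perm_SD n n 1; have [h2 _] := perm_SD n n 2.
rewrite -cat1s perm_catCA /= perm_cons perm_catC.
by apply: perm_cat => //; rewrite perm_rev.
Qed.

Lemma sl_uniq n : 0 < n -> uniq (sl n).
Proof. by move=> np; rewrite (perm_uniq (sl_perm np)) T_uniq. Qed.

Lemma sl_mem n x : 0 < n -> (x \in sl n) = (x < n).
Proof.
move=> np; rewrite (perm_mem (sl_perm np)).
apply/idP/idP; [exact: T_lt | exact: T_cover].
Qed.

Lemma sl_adj n x : x \in sl n -> 0 < x -> ~~ isD x -> adjb (sl n) x (par x).
Proof.
have [hS _] := adj_SD n n.
rewrite /sl mem_cat inE mem_rev => /orP [x2|/orP [/eqP->//|x1]] xp xD.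
- case: (eqVneq x 2) => [ex|nx].
    have [r hr] := Sl_head x2; rewrite ex hr rev_cons -cats1 -catA /=.
    by apply/orP; left; apply: infix_mid.
  apply: adjb_catr; apply: adjb_rev; apply: hS => //.
- case: (eqVneq x 1) => [ex|nx].
    have [r hr] := Sl_head x1; rewrite ex hr.
    by apply/orP; right; apply: (infix_mid 0 1 (rev (Sl n n 2))).
  rewrite -cat1s; apply: adjb_catl; apply: adjb_catl; apply: hS => //.
  all: try by rewrite isDE.
Qed.

Lemma infix_map2 (T1 T2 : eqType) (f : T1 -> T2) a b l :
  infix [:: a; b] l -> infix [:: f a; f b] (map f l).
Proof.
case/infixP => s1 [s2 ->]; rewrite map_cat /=.
exact: (infix_infix (map f s1) [:: f a; f b] (map f s2)).
Qed.

Lemma next_infix (T0 : eqType) (l : seq T0) a b :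
  uniq l -> infix [:: a; b] l -> next l a = b.
Proof.
move=> ul /infixP [s1 [s2 el]].
by rewrite -(next_rot (size s1) ul) el rot_size_cat /= eqxx.
Qed.

Lemma next_neq (T0 : eqType) (l : seq T0) x :
  uniq l -> 1 < size l -> x \in l -> next l x != x.
Proof.
move=> ul sl xl; case: (rot_to xl) => i q hq.
rewrite -(next_rot i ul) hq.
have : uniq (x :: q) by rewrite -hq rot_uniq.
have : 1 < size (x :: q) by rewrite -hq size_rot.
case: q {hq} => [|y q] //= _; rewrite eqxx inE negb_or => /andP [/andP [h _] _].
by rewrite eq_sym.
Qed.

Definition sv n (x0 : 'I_n) : seq 'I_n := map (insubd x0) (sl n).
Definition chord n (x y : 'I_n) := isD y && (val x == par y).
Definition adj n (x0 : 'I_n) (x y : 'I_n) := (next (sv x0) x == y) || chord x y.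
Definition eg n (x0 : 'I_n) : rel 'I_n := fun x y => adj x0 x y || adj x0 y x.

Lemma insubdK n (x0 : 'I_n) a : a < n -> val (insubd x0 a) = a.
Proof. by move=> an; rewrite val_insubd an. Qed.

Lemma sv_uniq n (x0 : 'I_n) : uniq (sv x0).
Proof.
have np : 0 < n := leq_ltn_trans (leq0n _) (ltn_ord x0).
rewrite map_inj_in_uniq ?sl_uniq // => a b; rewrite !sl_mem // => an bn h.
by rewrite -(insubdK x0 an) h insubdK.
Qed.

Lemma sv_mem n (x0 : 'I_n) x : x \in sv x0.
Proof.
have np : 0 < n := leq_ltn_trans (leq0n _) (ltn_ord x0).
have -> : x = insubd x0 (val x) by apply: val_inj; rewrite insubdK ?ltn_ord.
by apply: map_f; rewrite sl_mem ?ltn_ord.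
Qed.

Lemma sv_size n (x0 : 'I_n) : size (sv x0) = n.
Proof.
have np : 0 < n := leq_ltn_trans (leq0n _) (ltn_ord x0).
rewrite size_map.
have h : perm_eq (sl n) (iota 0 n).
  apply: uniq_perm; rewrite ?sl_uniq ?iota_uniq // => a.
  by rewrite sl_mem // mem_iota.
by rewrite (perm_size h) size_iota.
Qed.

Lemma eg_sym n (x0 : 'I_n) : symmetric (eg x0).
Proof. by move=> x y; rewrite /eg orbC. Qed.

Lemma eg_par n (x0 : 'I_n) (x : 'I_n) : 0 < val x -> eg x0 (insubd x0 (par x)) x.
Proof.
move=> xp.
have pn : par x < n := ltn_trans (par_lt xp) (ltn_ord x).
case xD: (isD x).
  by rewrite /eg /adj /chord xD insubdK // eqxx orbT.
have : adjb (sl n) x (par x).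
  by apply: sl_adj => //; [rewrite sl_mem ?ltn_ord // (leq_ltn_trans _ (ltn_ord x))|rewrite xD].
have ex : insubd x0 (val x) = x by apply: val_inj; rewrite insubdK ?ltn_ord.
case/orP => /(infix_map2 (insubd x0)) /(next_infix (sv_uniq x0)); rewrite ex => h;
  rewrite /eg /adj h eqxx ?orbT //.
Qed.

Definition Q x := ~~ odd x && (~~ odd x./2 || odd x./2./2).

Lemma halfP t : t = t./2 + t./2 + odd t.
Proof. by have := odd_double_half t; rewrite -addnn addnC. Qed.

Lemma isD_Q x : isD x -> Q x.
Proof.
rewrite isDE => /and4P [xp ox pp nD]; rewrite /Q ox /=.
apply/negPn/negP; rewrite negb_or negbK => /andP [oa ob].
move: nD; rewrite isDE pp /= negb_and negbK.
have ex := halfP x; have ea := halfP x./2; have eb := halfP x./2./2.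
have ep := halfP (x.-1); have eq := halfP ((par x).-1).
have ep2 := halfP (par x); have eq2 := halfP (par (par x)).
rewrite -/(par x) in ep; rewrite -/(par (par x)) in eq.
rewrite isDE negb_and negbK.
move: ex ea eb ep eq ep2 eq2 pp xp.
rewrite (negbTE ox) oa (negbTE ob).
case: (odd (par x)); case: (odd (par (par x))); case: (odd (x.-1)); case: (odd (par x).-1);
  rewrite /= -?subn1 ?andbF ?orbF; mlia.
Qed.

Lemma Q8 x : Q (8 + x) = Q x.
Proof. by rewrite /Q !halfD !oddD /=. Qed.

Lemma cntQ8 n : count Q (iota 0 (8 + n)) = 3 + count Q (iota 0 n).
Proof.
rewrite iotaD count_cat; congr (_ + _).
have -> : iota (0 + 8) n = map (addn 8) (iota 0 n) by rewrite -iotaDl.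
rewrite count_map; apply: eq_count => y /=; exact: Q8.
Qed.

Lemma cntQ n : 8 * count Q (iota 0 n) <= 3 * n + 5.
Proof.
elim/ltn_ind: n => n IH.
case: (ltnP n 8) => hn.
  by case: n hn {IH} => [|[|[|[|[|[|[|[|n]]]]]]]].
have h : n - 8 < n by move: hn; mlia.
have := IH _ h; move: (n - 8) (subnKC hn) => m <-.
rewrite cntQ8; mlia.
Qed.

Lemma cardD n (P : pred nat) : #|[set y : 'I_n | P y]| = count P (iota 0 n).
Proof.
rewrite -val_enum_ord count_map -size_filter cardE.
apply: perm_size; apply: uniq_perm; rewrite ?enum_uniq ?filter_uniq -?enumT ?enum_uniq //.
by move=> y; rewrite mem_enum mem_filter inE mem_enum andbT.
Qed.

Lemma isD_pos x : isD x -> 0 < x.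
Proof. by rewrite isDE => /andP []. Qed.

Lemma chord_irr n (x : 'I_n) : ~~ chord x x.
Proof.
rewrite /chord; apply/negP => /andP [d /eqP e].
by have := par_lt (isD_pos d); rewrite -e ltnn.
Qed.

Lemma eg_irr n (x0 : 'I_n) : 2 <= n -> irreflexive (eg x0).
Proof.
move=> n2 x; rewrite /eg orbb /adj (negbTE (chord_irr x)) orbF.
apply/negbTE/next_neq; rewrite ?sv_uniq ?sv_size ?sv_mem //.
Qed.

Lemma isD_child x : isD x -> x = (par x).*2.+2 /\ ~~ isD (par x).
Proof.
rewrite isDE => /and4P [xp ox _ nd]; split => //.
case: x xp ox {nd} => // y _ /=; rewrite /par /= => oy.
have := halfP y; move: oy; case: (odd y) => //= _; mlia.
Qed.

Lemma deg_le n (x0 : 'I_n) x : degree (eg x0) x <= 3.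
Proof.
pose pt := insubd x0 (if isD x then par x else (val x).*2.+2).
rewrite /degree.
apply: (@leq_trans #|[set next (sv x0) x; prev (sv x0) x; pt]|).
  apply: subset_leq_card; apply/subsetP => y; rewrite !inE /eg /adj.
  case/orP => /orP [] h.
  - by rewrite eq_sym h.
  - move: h; rewrite /chord => /andP [d /eqP e].
    have [ey nd] := isD_child d.
    rewrite -e in nd; rewrite /pt (negbTE nd); apply/orP; right; apply/eqP.
    apply: val_inj; rewrite e insubdK; [by rewrite -ey | by rewrite -ey; exact: ltn_ord].
  - move/eqP: h => <-; by rewrite (prev_next (sv_uniq x0)) eqxx orbT.
  - move: h; rewrite /chord => /andP [d /eqP e].
    rewrite /pt d; apply/orP; right; apply/eqP; apply: val_inj.
    rewrite insubdK; [by rewrite -e | by rewrite -e; exact: ltn_ord].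
by rewrite !cardsU !cards1; mlia.
Qed.

Lemma tl_par x : 0 < x -> trunc_log 2 x.+1 = (trunc_log 2 (par x).+1).+1.
Proof.
case: x => // y _; rewrite (@trunc_log2S y.+2) //.
Qed.

Lemma up n (x0 : 'I_n) : val x0 = 0 -> forall x : 'I_n,
  exists p, [/\ path (eg x0) x p, last x p = x0 & size p <= trunc_log 2 (val x).+1].
Proof.
move=> h0 x; move: {2}(val x) (erefl (val x)) => k.
elim/ltn_ind: k x => k IH x hk.
case: (posnP k) => [k0|kp].
  by exists [::]; split => //; apply: val_inj; rewrite hk k0 h0.
have xp : 0 < val x by rewrite hk.
have pn : par x < n := ltn_trans (par_lt xp) (ltn_ord x).
have vP : val (insubd x0 (par x)) = par x by rewrite insubdK.
have [|p [hp hl hs]] := IH (par x) _ (insubd x0 (par x)) vP.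
  by rewrite -hk; apply: par_lt.
exists (insubd x0 (par x) :: p); split.
- by rewrite /= hp andbT eg_sym eg_par.
- by rewrite /= hl.
- by rewrite /= tl_par // ltnS -vP.
Qed.

Lemma down n (x0 : 'I_n) : val x0 = 0 -> forall x : 'I_n,
  exists p, [/\ path (eg x0) x0 p, last x0 p = x & size p <= trunc_log 2 (val x).+1].
Proof.
move=> h0 x; move: {2}(val x) (erefl (val x)) => k.
elim/ltn_ind: k x => k IH x hk.
case: (posnP k) => [k0|kp].
  by exists [::]; split => //; apply: val_inj; rewrite hk k0 h0.
have xp : 0 < val x by rewrite hk.
have pn : par x < n := ltn_trans (par_lt xp) (ltn_ord x).
have vP : val (insubd x0 (par x)) = par x by rewrite insubdK.
have [|p [hp hl hs]] := IH (par x) _ (insubd x0 (par x)) vP.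
  by rewrite -hk; apply: par_lt.
exists (rcons p x); split.
- by rewrite rcons_path hp hl eg_par.
- by rewrite last_rcons.
- by rewrite size_rcons tl_par // ltnS -vP.
Qed.

Lemma diam n (x0 : 'I_n) : val x0 = 0 -> diameter_le (eg x0) (2 * trunc_log 2 n).
Proof.
move=> h0 x y.
have [p [hp hl hs]] := up h0 x; have [q [hq hl' hs']] := down h0 y.
exists (p ++ q); split.
- by rewrite cat_path hp hl hq.
- by rewrite last_cat hl hl'.
- rewrite size_cat.
  have h1 : trunc_log 2 (val x).+1 <= trunc_log 2 n := leq_trunc_log 2 (ltn_ord x).
  have h2 : trunc_log 2 (val y).+1 <= trunc_log 2 n := leq_trunc_log 2 (ltn_ord y).
  by rewrite mul2n -addnn; apply: leq_add; [apply: leq_trans h1|apply: leq_trans h2].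
Qed.

Lemma edges n (x0 : 'I_n) : num_edges (eg x0) <= n + #|[set y : 'I_n | isD y]|.
Proof.
have -> : num_edges (eg x0) =
  #|[set p : 'I_n * 'I_n | (enum_rank p.1 < enum_rank p.2) && eg x0 p.1 p.2]| by [].
pose f : 'I_n -> 'I_n * 'I_n := fun x => if enum_rank x < enum_rank (next (sv x0) x)
  then (x, next (sv x0) x) else (next (sv x0) x, x).
pose g : 'I_n -> 'I_n * 'I_n := fun y => (insubd x0 (par y), y).
apply: (@leq_trans #|f @: [set: 'I_n] :|: g @: [set y : 'I_n | isD y]|).
  apply: subset_leq_card; apply/subsetP => -[a b]; rewrite !inE /= => /andP [r h].
  have rv : val a < val b by move: r; rewrite !enum_rank_ord.
  case/orP: h => /orP [] h.
  - apply/orP; left; apply/imsetP; exists a; rewrite ?inE //.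
    by rewrite /f (eqP h) r.
  - move: h; rewrite /chord => /andP [d /eqP e].
    apply/orP; right; apply/imsetP; exists b; rewrite ?inE //.
    rewrite /g; congr (_, _); apply: val_inj; rewrite insubdK; [by [] | by rewrite -e; exact: ltn_ord].
  - apply/orP; left; apply/imsetP; exists b; rewrite ?inE //.
    by rewrite /f (eqP h) ltnNge (ltnW r).
  - move: h; rewrite /chord => /andP [d /eqP e].
    by have := par_lt (isD_pos d); rewrite -e ltnNge (ltnW rv).
apply: leq_trans (leq_card_setU _ _).1 _.
apply: leq_add.
  by apply: leq_trans (leq_imset_card _ _) _; rewrite cardsT card_ord.
exact: leq_imset_card.
Qed.

Lemma edges_bound n (x0 : 'I_n) : num_edges (eg x0) <= (11 * n + 6) %/ 8.
Proof.
apply: leq_trans (edges x0) _.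
rewrite leq_divRL // cardD.
have h1 : count isD (iota 0 n) <= count Q (iota 0 n) by apply: sub_count => y; apply: isD_Q.
have h2 := cntQ n.
move: h1 h2; mlia.
Qed.
Theorem mainTheorem6 (n : nat) (hn : (3 <= n)%N) :
  exists e : rel 'I_n,
    [/\ simple_graph e,
        hamiltonian e,
        (forall x : 'I_n, (degree e x <= 3)%N),
        diameter_le e (2 * trunc_log 2 n) &
        (num_edges e <= (11 * n + 6) %/ 8)%N].
Proof.
have np : 0 < n by apply: leq_trans hn.
pose x0 : 'I_n := Ordinal np.
exists (eg x0); split.
- split; first exact: eg_sym.
  by apply: eg_irr; apply: leq_trans hn.
- exists (sv x0); split.
  + exact: sv_uniq.
  + by rewrite sv_size card_ord.
  + apply: (cycle_from_next (sv_uniq x0)) => x _.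
    by rewrite /eg /adj eqxx.
- exact: deg_le.
- exact: diam.
- exact: edges_bound.
Qed.
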